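(* For every integer $n\ge0$ and every $x>0$, $$\frac{2n}{x}+\frac{i_{n+1}(x)}{i_n(x)}-\frac{k_{n+1}(x)}{k_n(x)}<0 .$$
   Context: $i_n(x)=\sqrt{\frac{\pi}{2x}}\,I_{n+1/2}(x)$ and $k_n(x)=\sqrt{\frac{2}{\pi x}}\,K_{n+1/2}(x)$ are the modified spherical Bessel functions of the first and second kind, where $I_\nu$ and $K_\nu$ are the modified Bessel functions of the first and second kind. *)

(* Defs.v *)
From Stdlib Require Import Reals Factorial.
From Coquelicot Require Import Coquelicot.
Open Scope R_scope.

Definition Gamma (s : R) : R :=
  RInt_gen (fun t => Rpower t (s - 1) * exp (- t))
           (at_right 0) (Rbar_locally p_infty).

Definition BesselI (nu x : R) : R :=
  Series (fun k : nat =>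
    (x / 2) ^ (2 * k) * Rpower (x / 2) nu / (INR (fact k) * Gamma (INR k + nu + 1))).

(* Modified Bessel function of the second kind, x > 0 (DLMF 10.32.9):
   K_nu(x) = int_0^oo exp(-x cosh t) cosh(nu t) dt. *)
Definition BesselK (nu x : R) : R :=
  RInt_gen (fun t => exp (- x * cosh t) * cosh (nu * t))
           (at_point 0) (Rbar_locally p_infty).

Definition sph_i (n : nat) (x : R) : R :=
  sqrt (PI / (2 * x)) * BesselI (INR n + / 2) x.

Definition sph_k (n : nat) (x : R) : R :=
  sqrt (2 / (PI * x)) * BesselK (INR n + / 2) x.

(* Main.v *)
Require Import Defs.
From Stdlib Require Import Reals Lra Lia ZArith Factorial.
From Coquelicot Require Import Coquelicot.
Open Scope R_scope.


Lemma RInt_correct_R (f : R -> R) a b : ex_RInt f a b -> is_RInt f a b (RInt f a b).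
Proof. intros H. exact (RInt_correct (V := R_CompleteNormedModule) f a b H). Qed.

Lemma is_RInt_unique_R (f : R -> R) a b l : is_RInt f a b l -> RInt f a b = l.
Proof. intros H. exact (is_RInt_unique (V := R_CompleteNormedModule) f a b l H). Qed.

Lemma ex_RInt_sub (f : R -> R) lo hi p q :
  ex_RInt f lo hi -> lo <= p <= hi -> lo <= q <= hi -> ex_RInt f p q.
Proof.
  intros H Hp Hq.
  assert (Hp' : ex_RInt f p hi) by (apply (ex_RInt_Chasles_2 (V := R_CompleteNormedModule) f lo); [lra|auto]).
  destruct (Rle_dec p q).
  - apply (ex_RInt_Chasles_1 (V := R_CompleteNormedModule) f p q hi); [lra|auto].
  - apply ex_RInt_swap.
    assert (Hq' : ex_RInt f q hi) by (apply (ex_RInt_Chasles_2 (V := R_CompleteNormedModule) f lo); [lra|auto]).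
    apply (ex_RInt_Chasles_1 (V := R_CompleteNormedModule) f q p hi); [lra|auto].
Qed.

Lemma tail_bound (f : R -> R) C p q :
  0 <= C -> 1 <= p <= q -> ex_RInt f p q ->
  (forall t, 1 <= t -> Rabs (f t) <= C / (t*t)) ->
  Rabs (RInt f p q) <= C / p.
Proof.
  intros HC Hpq Hex Hb.
  assert (HI : is_RInt (fun t => C / (t*t)) p q (C/p - C/q)).
  { replace (C/p - C/q) with (minus ((fun t => - C / t) q) ((fun t => - C/t) p))
      by (unfold minus, plus, opp; simpl; field; lra).
    apply (is_RInt_derive (fun t => - C / t)).
    - intros x Hx. rewrite Rmin_left in Hx by lra. rewrite Rmax_right in Hx by lra.
      auto_derive. lra. field. lra.
    - intros x Hx. rewrite Rmin_left in Hx by lra. rewrite Rmax_right in Hx by lra.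
      apply continuity_pt_filterlim.
      apply continuity_pt_div. apply continuity_pt_const. intros u v; auto.
      apply continuity_pt_mult; apply continuity_pt_id. nra. }
  assert (H := norm_RInt_le f (fun t => C/(t*t)) p q (RInt f p q) (C/p - C/q)
     (proj2 Hpq) ).
  assert (Rabs (RInt f p q) <= C/p - C/q).
  { apply H; auto. intros x Hx. apply Hb. lra. apply RInt_correct_R; auto. }
  assert (0 <= C/q). { apply Rdiv_le_0_compat; lra. }
  lra.
Qed.

Lemma ex_gen (f : R -> R) (Fa : (R -> Prop) -> Prop) (M C : R) :
  ProperFilter Fa ->
  Fa (fun a => 0 <= a < 1 /\ (forall b, a <= b -> ex_RInt f a b) /\
               (forall t, a <= t <= 1 -> Rabs (f t) <= M)) ->
  (forall eps : posreal, Fa (fun a => a < eps)) ->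
  (forall t, 1 <= t -> Rabs (f t) <= C / (t*t)) ->
  ex_RInt_gen f Fa (Rbar_locally p_infty).
Proof.
  intros HF H0 Hsmall Htail.
  set (C' := Rabs C + 1). set (M' := Rabs M + 1).
  assert (HC' : 0 < C') by (unfold C'; pose proof (Rabs_pos C); lra).
  assert (HM' : 0 < M') by (unfold M'; pose proof (Rabs_pos M); lra).
  assert (Htail' : forall t, 1 <= t -> Rabs (f t) <= C' / (t*t)).
  { intros t Ht. eapply Rle_trans. apply Htail; auto.
    unfold Rdiv. apply Rmult_le_compat_r.
    apply Rlt_le, Rinv_0_lt_compat; nra.
    unfold C'. pose proof (Rle_abs C). lra. }
  unfold ex_RInt_gen, is_RInt_gen.
  assert (HP : ProperFilter (filter_prod Fa (Rbar_locally p_infty))).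
  { apply filter_prod_proper; auto; apply Rbar_locally_filter. }
  apply (filterlimi_locally_cauchy (U := R_CompleteSpace) (F := filter_prod Fa (Rbar_locally p_infty)) (fun ab : R * R => is_RInt f (fst ab) (snd ab)) ).
  - assert (Hr1 : Rbar_locally p_infty (fun b => 1 < b)) by (exists 1; auto).
    apply Filter_prod with (1 := H0) (2 := Hr1).
    intros a b [Ha [Hex _]] Hb. simpl. split.
    + exists (RInt f a b). apply RInt_correct_R. apply Hex. lra.
    + intros y1 y2 H1 H2. apply is_RInt_unique_R in H1. apply is_RInt_unique_R in H2. congruence.
  - intros eps.
    set (d := eps / (4 * M')).
    assert (Hd : 0 < d) by (unfold d; apply Rdiv_lt_0_compat; [apply cond_pos|lra]).
    set (B := Rmax 1 (4 * C' / eps)).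
    exists (fun ab => (0 <= fst ab < 1 /\ (forall b, fst ab <= b -> ex_RInt f (fst ab) b) /\
               (forall t, fst ab <= t <= 1 -> Rabs (f t) <= M)) /\ fst ab < d /\ B < snd ab).
    split.
    + apply Filter_prod with (Q := fun a => (0 <= a < 1 /\ (forall b, a <= b -> ex_RInt f a b) /\
               (forall t, a <= t <= 1 -> Rabs (f t) <= M)) /\ a < d) (R := fun b => B < b).
      * apply filter_and; auto. apply (Hsmall (mkposreal d Hd)).
      * exists B. auto.
      * intros a b Ha Hb. simpl. tauto.
    + intros [a b] [a' b']; simpl.
      intros [[Ha0 [Haex Hab]] [Had HbB]] [[Ha0' [Haex' Hab']] [Had' HbB']] u' v' Hu Hv.
      apply is_RInt_unique_R in Hu. apply is_RInt_unique_R in Hv. subst u' v'.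
      assert (HB1 : 1 <= B) by apply Rmax_l.
      assert (HB2 : 4 * C' / eps <= B) by apply Rmax_r.
      set (hi := Rmax b b').
      assert (Ex1 : ex_RInt f a hi) by (apply Haex; unfold hi; pose proof (Rmax_l b b'); lra).
      assert (Ex2 : ex_RInt f a' hi) by (apply Haex'; unfold hi; pose proof (Rmax_l b b'); lra).
      assert (Eaa' : ex_RInt f a a').
      { destruct (Rle_dec a a').
        - apply ex_RInt_sub with a hi; auto; unfold hi; pose proof (Rmax_l b b'); lra.
        - apply ex_RInt_swap. apply ex_RInt_sub with a' hi; auto; unfold hi; pose proof (Rmax_l b b'); lra. }
      assert (Ea'b : ex_RInt f a' b) by (apply ex_RInt_sub with a' hi; auto; unfold hi;
         pose proof (Rmax_l b b'); pose proof (Rmax_r b b'); lra).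
      assert (Ea'b' : ex_RInt f a' b') by (apply ex_RInt_sub with a' hi; auto; unfold hi;
         pose proof (Rmax_l b b'); pose proof (Rmax_r b b'); lra).
      assert (Eb'b : ex_RInt f b' b) by (apply ex_RInt_sub with a' hi; auto; unfold hi;
         pose proof (Rmax_l b b'); pose proof (Rmax_r b b'); lra).
      assert (E1 : RInt f a b = RInt f a a' + RInt f a' b).
      { symmetry. apply (RInt_Chasles f a a' b); auto. }
      assert (E2 : RInt f a' b = RInt f a' b' + RInt f b' b).
      { symmetry. apply (RInt_Chasles f a' b' b); auto. }
      assert (Bnd1 : Rabs (RInt f a a') <= Rabs (a' - a) * M').
      { apply (norm_RInt_le_const_abs f a a' (RInt f a a') M').
        - intros x Hx. change (norm (f x)) with (Rabs (f x)).
          destruct (Rle_dec a a').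
          + rewrite Rmin_left in Hx by lra. rewrite Rmax_right in Hx by lra.
            eapply Rle_trans. apply Hab. lra. unfold M'. pose proof (Rle_abs M); lra.
          + rewrite Rmin_right in Hx by lra. rewrite Rmax_left in Hx by lra.
            eapply Rle_trans. apply Hab'. lra. unfold M'. pose proof (Rle_abs M); lra.
        - apply RInt_correct_R; auto. }
      assert (Bnd2 : Rabs (RInt f b' b) <= C' / B).
      { destruct (Rle_dec b' b).
        - eapply Rle_trans. apply tail_bound with (f := f) (C := C'); auto; lra.
          unfold Rdiv; apply Rmult_le_compat_l; [lra|]. apply Rinv_le_contravar; lra.
        - rewrite <- (opp_RInt_swap (V := R_CompleteNormedModule) f b b') by (apply ex_RInt_swap; auto).
          change (opp (RInt f b b')) with (- RInt f b b').
          rewrite Rabs_Ropp.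
          eapply Rle_trans. apply tail_bound with (f := f) (C := C'); auto; try lra.
          apply ex_RInt_swap; auto.
          unfold Rdiv; apply Rmult_le_compat_l; [lra|]. apply Rinv_le_contravar; lra. }
      assert (Hda : Rabs (a' - a) <= d) by (apply Rabs_le; lra).
      assert (T1 : Rabs (a' - a) * M' <= eps / 4).
      { apply Rle_trans with (d * M'). apply Rmult_le_compat_r; lra.
        unfold d. right. field. lra. }
      assert (T2 : C' / B <= eps / 4).
      { pose proof (cond_pos eps).
        apply Rle_trans with (C' / (4 * C' / eps)).
        unfold Rdiv. apply Rmult_le_compat_l. lra. apply Rinv_le_contravar.
        apply Rdiv_lt_0_compat; lra. lra. right. field. lra. }
      change (ball (RInt f a b) eps (RInt f a' b')) with (Rabs (RInt f a' b' - RInt f a b) < eps).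
      rewrite E1, E2.
      replace (RInt f a' b' - (RInt f a a' + (RInt f a' b' + RInt f b' b)))
        with (- (RInt f a a' + RInt f b' b)) by ring.
      rewrite Rabs_Ropp. eapply Rle_lt_trans. apply Rabs_triang.
      pose proof (cond_pos eps). lra.
Qed.


Lemma gen_pos (f : R -> R) (Fa : (R -> Prop) -> Prop) l :
  ProperFilter Fa ->
  Fa (fun a => 0 <= a <= 1 /\ (forall b, a <= b -> ex_RInt f a b)) ->
  (forall t, 0 < t -> 0 <= f t) ->
  (forall t, 1 < t < 2 -> 0 < f t) ->
  (forall t, 1 <= t <= 2 -> continuous f t) ->
  is_RInt_gen f Fa (Rbar_locally p_infty) l -> 0 < l.
Proof.
  intros HF H0 Hnn Hp Hc Hl.
  set (m := RInt f 1 2).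
  assert (Hm : 0 < m) by (apply RInt_gt_0; auto; lra).
  unfold is_RInt_gen in Hl.
  assert (HP : ProperFilter (filter_prod Fa (Rbar_locally p_infty))).
  { apply filter_prod_proper; auto; apply Rbar_locally_filter. }
  pose proof (proj1 (filterlimi_locally (F := filter_prod Fa (Rbar_locally p_infty)) (fun ab : R * R => is_RInt f (fst ab) (snd ab)) l) Hl (mkposreal (m/2) ltac:(lra))) as H1.
  assert (Hr : Rbar_locally p_infty (fun b => 2 < b)) by (exists 2; auto).
  assert (H2 : filter_prod Fa (Rbar_locally p_infty) (fun ab => (0 <= fst ab <= 1 /\ (forall b, fst ab <= b -> ex_RInt f (fst ab) b)) /\ 2 < snd ab)).
  { apply Filter_prod with (1 := H0) (2 := Hr). intros; simpl; auto. }
  destruct (filter_ex _ (filter_and _ _ H1 H2)) as [[a b] [[z [Hz Hb]] [[Ha Hex] Hb2]]].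
  simpl in *.
  apply is_RInt_unique_R in Hz. subst z.
  assert (E1 : ex_RInt f a b) by (apply Hex; lra).
  assert (Ea1 : ex_RInt f a 1) by (apply ex_RInt_sub with a b; auto; lra).
  assert (E12 : ex_RInt f 1 2) by (apply ex_RInt_sub with a b; auto; lra).
  assert (E2b : ex_RInt f 2 b) by (apply ex_RInt_sub with a b; auto; lra).
  assert (E1b : ex_RInt f 1 b) by (apply ex_RInt_sub with a b; auto; lra).
  assert (S1 : RInt f a b = RInt f a 1 + RInt f 1 b) by (symmetry; apply (RInt_Chasles f a 1 b); auto).
  assert (S2 : RInt f 1 b = RInt f 1 2 + RInt f 2 b) by (symmetry; apply (RInt_Chasles f 1 2 b); auto).
  assert (P1 : 0 <= RInt f a 1) by (apply RInt_ge_0; auto; try lra; intros; apply Hnn; lra).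
  assert (P2 : 0 <= RInt f 2 b) by (apply RInt_ge_0; auto; try lra; intros; apply Hnn; lra).
  change (Rabs (RInt f a b - l) < m/2) in Hb.
  apply Rabs_def2 in Hb. fold m in S2. lra.
Qed.

Lemma ln_le_m1 y : 0 < y -> ln y <= y - 1.
Proof. intros Hy. pose proof (exp_ineq1_le (ln y)). rewrite exp_ln in H by auto. lra. Qed.

Lemma key_bound p t : 0 < p -> 0 < t -> p * ln t - t <= p * (ln p - 1).
Proof.
  intros Hp Ht. pose proof (ln_le_m1 (t/p) ltac:(apply Rdiv_lt_0_compat; lra)).
  rewrite ln_div in H by lra.
  assert (p * (ln t - ln p) <= p * (t/p - 1)) by (apply Rmult_le_compat_l; lra).
  replace (p * (t/p - 1)) with (t - p) in H0 by (field; lra). lra.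
Qed.

Lemma exd_cont (f : R -> R) x : ex_derive f x -> continuous f x.
Proof. intros H. exact (ex_derive_continuous (K := R_AbsRing) (V := R_NormedModule) f x H). Qed.

Lemma ex_RInt_cont (f : R -> R) a b :
  (forall z, Rmin a b <= z <= Rmax a b -> continuous f z) -> ex_RInt f a b.
Proof. intros H. exact (ex_RInt_continuous (V := R_CompleteNormedModule) f a b H). Qed.

Definition gi (s t : R) := Rpower t (s - 1) * exp (- t).

Lemma gi_cont s t : 0 < t -> continuous (gi s) t.
Proof.
  intros Ht. apply exd_cont. unfold gi, Rpower. auto_derive. auto.
Qed.

Lemma gi_exp s t : 0 < t -> gi s t = exp ((s - 1) * ln t - t).
Proof. intros Ht. unfold gi, Rpower. rewrite <- exp_plus. f_equal. Qed.

Lemma gi_tail s t : 1 <= s -> 1 <= t -> Rabs (gi s t) <= exp ((s+1) * (ln (s+1) - 1)) / (t * t).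
Proof.
  intros Hs Ht. rewrite gi_exp by lra. rewrite Rabs_pos_eq by (left; apply exp_pos).
  apply Rmult_le_reg_r with (t*t). nra.
  unfold Rdiv. rewrite Rmult_assoc, Rinv_l, Rmult_1_r by nra.
  replace (t * t) with (exp (2 * ln t)).
  2:{ replace (2 * ln t) with (ln t + ln t) by ring. rewrite exp_plus, exp_ln; lra. }
  rewrite <- exp_plus. apply exp_le_3 || idtac.
  destruct (Req_dec ((s - 1) * ln t - t + 2 * ln t) ((s + 1) * (ln (s + 1) - 1))) as [E|E].
  rewrite E; lra.
  left. apply exp_increasing.
  pose proof (key_bound (s+1) t ltac:(lra) ltac:(lra)). lra.
Qed.

Lemma gi_small s t : 1 <= s -> 0 < t <= 1 -> Rabs (gi s t) <= 1.
Proof.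
  intros Hs Ht. rewrite gi_exp by lra. rewrite Rabs_pos_eq by (left; apply exp_pos).
  assert (ln t <= 0) by (rewrite <- ln_1; apply ln_le; lra).
  assert (0 <= (s-1) * (- ln t)) by (apply Rmult_le_pos; lra).
  assert ((s-1)*ln t = - ((s-1)*(-ln t))) by ring.
  assert (H2: (s-1)*ln t - t <= 0) by lra. destruct H2 as [H2|H2].
  left; apply Rlt_le_trans with (exp 0); [apply exp_increasing; lra | rewrite exp_0; lra]. rewrite H2, exp_0; lra.
Qed.

Lemma at_right0_ball (P : R -> Prop) (e : R) : 0 < e -> (forall y, 0 < y < e -> P y) -> at_right 0 P.
Proof.
  intros He H. exists (mkposreal e He). intros y Hy Hpos. apply H.
  change (Rabs (y - 0) < e) in Hy. rewrite Rminus_0_r, Rabs_pos_eq in Hy by lra. lra.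
Qed.

Lemma Gamma_ex s : 1 <= s -> ex_RInt_gen (gi s) (at_right 0) (Rbar_locally p_infty).
Proof.
  intros Hs.
  apply ex_gen with (M := 1) (C := exp ((s+1) * (ln (s+1) - 1))).
  - apply at_right_proper_filter.
  - apply at_right0_ball with 1. lra. intros y Hy. split. lra. split.
    + intros b Hb. apply ex_RInt_cont. intros z Hz.
      rewrite Rmin_left in Hz by lra. apply gi_cont. lra.
    + intros t Ht. apply gi_small; lra.
  - intros eps. apply at_right0_ball with eps. apply cond_pos. intros; lra.
  - intros t Ht. apply gi_tail; lra.
Qed.

Lemma gi_pos s t : 0 < t -> 0 < gi s t.
Proof. intros Ht. rewrite gi_exp by auto. apply exp_pos. Qed.

Lemma Gamma_is s : 1 <= s -> is_RInt_gen (gi s) (at_right 0) (Rbar_locally p_infty) (RInt_gen (gi s) (at_right 0) (Rbar_locally p_infty)).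
Proof.
  intros Hs. apply (RInt_gen_correct (V := R_CompleteNormedModule)).
  apply Gamma_ex; auto.
Qed.

Lemma Gamma_pos' s : 1 <= s -> 0 < RInt_gen (gi s) (at_right 0) (Rbar_locally p_infty).
Proof.
  intros Hs. apply gen_pos with (f := gi s) (Fa := at_right 0).
  - apply at_right_proper_filter.
  - apply at_right0_ball with 1. lra. intros y Hy. split. lra.
    intros b Hb. apply ex_RInt_cont. intros z Hz.
    rewrite Rmin_left in Hz by lra. apply gi_cont. lra.
  - intros t Ht. left; apply gi_pos; auto.
  - intros t Ht. apply gi_pos; lra.
  - intros t Ht. apply gi_cont; lra.
  - apply Gamma_is; auto.
Qed.

Lemma gi_small2 s t : 1 <= s -> 0 < t <= 1 -> gi (s+1) t <= t.
Proof.
  intros Hs Ht. rewrite gi_exp by lra.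
  assert (ln t <= 0) by (rewrite <- ln_1; apply ln_le; lra).
  assert (0 <= (s-1) * (- ln t)) by (apply Rmult_le_pos; lra).
  assert ((s+1-1)*ln t = ln t - ((s-1)*(-ln t))) by ring.
  assert (H2: (s+1-1)*ln t - t <= ln t) by lra. destruct H2 as [H2|H2].
  left; apply Rlt_le_trans with (exp (ln t)); [apply exp_increasing; lra | rewrite exp_ln; lra].
  rewrite H2, exp_ln; lra.
Qed.

Lemma gi_tail1 s t : 0 < s -> 0 < t -> gi (s+1) t <= exp ((s+1) * (ln (s+1) - 1)) / t.
Proof.
  intros Hs Ht. rewrite gi_exp by lra.
  apply Rmult_le_reg_r with t. lra.
  unfold Rdiv. rewrite Rmult_assoc, Rinv_l, Rmult_1_r by lra.
  replace (exp ((s + 1 - 1) * ln t - t) * t) with (exp ((s + 1 - 1) * ln t - t + ln t))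
    by (rewrite exp_plus, exp_ln; lra).
  pose proof (key_bound (s+1) t ltac:(lra) ltac:(lra)).
  assert (H2 : (s + 1 - 1) * ln t - t + ln t <= (s + 1) * (ln (s + 1) - 1)) by lra.
  destruct H2 as [H2|H2]. left; apply exp_increasing; auto. rewrite H2; lra.
Qed.

Lemma deriv_h s t : 0 < t -> is_derive (fun t => - (Rpower t s * exp (-t))) t (gi (s+1) t - s * gi s t).
Proof.
  intros Ht. unfold gi, Rpower.
  replace (exp ((s + 1 - 1) * ln t)) with (exp (s * ln t)) by (f_equal; ring).
  replace (exp ((s - 1) * ln t)) with (exp (s * ln t) * / t).
  2:{ replace ((s-1) * ln t) with (s * ln t + - ln t) by ring. rewrite exp_plus, exp_Ropp, exp_ln; auto. }
  auto_derive. auto. field. lra.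
Qed.

Lemma Gamma_succ' s : 1 <= s ->
  RInt_gen (gi (s+1)) (at_right 0) (Rbar_locally p_infty) = s * RInt_gen (gi s) (at_right 0) (Rbar_locally p_infty).
Proof.
  intros Hs.
  set (h := fun t => - (Rpower t s * exp (-t))).
  assert (HD : forall t, 0 < t -> Derive h t = gi (s+1) t - s * gi s t).
  { intros t Ht. apply is_derive_unique. apply deriv_h; auto. }
  assert (Hpos0 : at_right 0 (fun a => 0 < a)) by (apply at_right0_ball with 1; [lra| intros; lra]).
  assert (Hposi : Rbar_locally p_infty (fun b => 0 < b)) by (exists 0; auto).
  assert (I1 : is_RInt_gen (Derive h) (at_right 0) (Rbar_locally p_infty) (0 - 0)).
  { apply is_RInt_gen_Derive.
    - apply Filter_prod with (1 := Hpos0) (2 := Hposi). intros a b Ha Hb x Hx. simpl in Hx.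
      exists (gi (s+1) x - s * gi s x). apply deriv_h.
      pose proof (Rmin_glb_lt a b 0). destruct (Rle_dec a b); [rewrite Rmin_left in Hx|rewrite Rmin_right in Hx]; lra.
    - apply Filter_prod with (1 := Hpos0) (2 := Hposi). intros a b Ha Hb x Hx. simpl in Hx.
      assert (Hx0 : 0 < x) by (destruct (Rle_dec a b); [rewrite Rmin_left in Hx|rewrite Rmin_right in Hx]; lra).
      apply continuous_ext_loc with (fun y => gi (s+1) y - s * gi s y).
      + exists (mkposreal x Hx0). intros y Hy. change (Rabs (y - x) < x) in Hy.
        symmetry. apply HD. apply Rabs_def2 in Hy. lra.
      + apply exd_cont. unfold gi, Rpower. auto_derive. lra.
    - apply (proj2 (filterlim_locally (F := at_right 0) h 0)).
      intros eps. apply at_right0_ball with (Rmin eps 1).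
      apply Rmin_glb_lt; [apply cond_pos|lra].
      intros y Hy. pose proof (Rmin_l eps 1). pose proof (Rmin_r eps 1).
      change (Rabs (h y - 0) < eps). unfold h.
      assert (E : Rpower y s * exp (- y) = gi (s+1) y) by (unfold gi; do 2 f_equal; ring).
      rewrite E. pose proof (gi_small2 s y Hs ltac:(lra)). pose proof (gi_pos (s+1) y ltac:(lra)).
      rewrite Rminus_0_r, Rabs_Ropp, Rabs_pos_eq by lra. lra.
    - apply (proj2 (filterlim_locally (F := Rbar_locally p_infty) h 0)).
      intros eps. set (C := exp ((s+1) * (ln (s+1) - 1))).
      exists (Rmax 1 (C / eps)). intros y Hy.
      pose proof (Rmax_l 1 (C/eps)). pose proof (Rmax_r 1 (C/eps)).
      change (Rabs (h y - 0) < eps). unfold h.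
      assert (E : Rpower y s * exp (- y) = gi (s+1) y) by (unfold gi; do 2 f_equal; ring).
      rewrite E. pose proof (gi_tail1 s y ltac:(lra) ltac:(lra)). pose proof (gi_pos (s+1) y ltac:(lra)).
      rewrite Rminus_0_r, Rabs_Ropp, Rabs_pos_eq by lra.
      eapply Rle_lt_trans. apply H1. fold C.
      pose proof (cond_pos eps). assert (0 < C) by apply exp_pos.
      apply Rmult_lt_reg_r with y. lra. unfold Rdiv. rewrite Rmult_assoc, Rinv_l, Rmult_1_r by lra.
      assert (C / eps < y) by lra.
      apply Rmult_lt_reg_r with (/ eps). apply Rinv_0_lt_compat; lra.
      replace (eps * y * / eps) with y by (field; lra). lra. }
  assert (I2 := Gamma_is s Hs).
  assert (I3 : is_RInt_gen (fun y => plus (Derive h y) (scal s (gi s y))) (at_right 0) (Rbar_locally p_infty)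
      (plus (0 - 0) (scal s (RInt_gen (gi s) (at_right 0) (Rbar_locally p_infty))))).
  { exact (is_RInt_gen_plus (V:=R_NormedModule) (Fa:=at_right 0) (Fb:=Rbar_locally p_infty) (Derive h) (fun y => scal s (gi s y)) _ _ I1 (is_RInt_gen_scal (V:=R_NormedModule) (Fa:=at_right 0) (Fb:=Rbar_locally p_infty) (gi s) s _ I2)). }
  assert (I4 : is_RInt_gen (gi (s+1)) (at_right 0) (Rbar_locally p_infty)
      (plus (0 - 0) (scal s (RInt_gen (gi s) (at_right 0) (Rbar_locally p_infty))))).
  { apply is_RInt_gen_ext with (2 := I3).
    apply Filter_prod with (1 := Hpos0) (2 := Hposi). intros a b Ha Hb x Hx. simpl in Hx.
    assert (Hx0 : 0 < x) by (destruct (Rle_dec a b); [rewrite Rmin_left in Hx|rewrite Rmin_right in Hx]; lra).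
    rewrite HD by auto. change (gi (s + 1) x - s * gi s x + s * gi s x = gi (s+1) x). ring. }
  apply (is_RInt_gen_unique (V := R_CompleteNormedModule)) in I4.
  rewrite I4. change (0 - 0 + s * RInt_gen (gi s) (at_right 0) (Rbar_locally p_infty) = s * RInt_gen (gi s) (at_right 0) (Rbar_locally p_infty)). ring.
Qed.


Definition ki (x mu t : R) := exp (- x * cosh t) * cosh (mu * t).

Lemma cosh_ge t : 0 <= t -> t * t / 8 <= cosh t.
Proof.
  intros Ht. unfold cosh.
  pose proof (exp_ineq1_le (t/2)). 
  assert (exp t = exp (t/2) * exp (t/2)) by (rewrite <- exp_plus; f_equal; field).
  pose proof (exp_pos (-t)). nra.
Qed.

Lemma kexp_bound x b t : 0 < x -> 0 <= b -> 1 <= t ->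
  exp (- x * cosh t) * exp (b * t) <= exp (2 * (b+2) * (b+2) / x) / (t*t).
Proof.
  intros Hx Hb Ht.
  apply Rmult_le_reg_r with (t*t). nra.
  replace (exp (2 * (b + 2) * (b + 2) / x) / (t * t) * (t * t)) with (exp (2 * (b + 2) * (b + 2) / x)) by (field; nra).
  replace (t * t) with (exp (2 * ln t)).
  2:{ replace (2 * ln t) with (ln t + ln t) by ring. rewrite exp_plus, exp_ln; lra. }
  rewrite <- !exp_plus.
  pose proof (ln_le_m1 t ltac:(lra)).
  pose proof (cosh_ge t ltac:(lra)).
  assert (- x * cosh t + b * t + 2 * ln t <= 2 * (b + 2) * (b + 2) * / x).
  { assert (x * (- x * cosh t + b * t + 2 * ln t) <= 2 * (b + 2) * (b + 2)).
    { assert (0 <= (x * t - 4 * (b+2)) * (x * t - 4 * (b+2))) by (pose proof (Rle_0_sqr (x*t - 4*(b+2))) as Hq; unfold Rsqr in Hq; exact Hq).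
      assert (x * (x * cosh t) >= x * (x * (t*t/8))) by (apply Rle_ge; apply Rmult_le_compat_l; [lra|]; apply Rmult_le_compat_l; lra).
      assert (x * (2 * ln t) <= x * (2 * t)) by (apply Rmult_le_compat_l; lra).
      lra. }
    apply Rmult_le_reg_l with x. lra. replace (x * (2 * (b + 2) * (b + 2) * / x)) with (2 * (b + 2) * (b + 2)) by (field; lra). lra. }
  destruct H1 as [H1|H1]. left; apply exp_increasing; auto. rewrite H1; lra.
Qed.

Lemma cosh_le_exp y : cosh y <= exp (Rabs y).
Proof.
  unfold cosh. unfold Rabs. destruct (Rcase_abs y).
  - assert (exp y <= exp (- y)) by (left; apply exp_increasing; lra). lra.
  - assert (exp (- y) <= exp y) by (destruct (Req_dec y 0); [subst; rewrite Ropp_0; lra| left; apply exp_increasing; lra]). lra.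
Qed.

Lemma sinh_le_exp y : Rabs (sinh y) <= exp (Rabs y).
Proof.
  unfold sinh. pose proof (exp_pos y). pose proof (exp_pos (-y)). pose proof (cosh_le_exp y). unfold cosh in H1.
  apply Rabs_le. lra.
Qed.

Lemma cosh_pos y : 0 < cosh y.
Proof. unfold cosh. pose proof (exp_pos y). pose proof (exp_pos (-y)). lra. Qed.

Lemma ki_pos x mu t : 0 < ki x mu t.
Proof. unfold ki. apply Rmult_lt_0_compat. apply exp_pos. apply cosh_pos. Qed.

Lemma ki_cont x mu t : continuous (ki x mu) t.
Proof. apply exd_cont. unfold ki, cosh. auto_derive. auto. Qed.

Lemma ki_tail x mu t : 0 < x -> 1 <= t -> Rabs (ki x mu t) <= exp (2 * (Rabs mu+2) * (Rabs mu+2) / x) / (t*t).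
Proof.
  intros Hx Ht. rewrite Rabs_pos_eq by (left; apply ki_pos).
  eapply Rle_trans. 2: apply kexp_bound; auto; apply Rabs_pos.
  unfold ki. apply Rmult_le_compat_l. left; apply exp_pos.
  eapply Rle_trans. apply cosh_le_exp. rewrite Rabs_mult, (Rabs_pos_eq t) by lra.
  right; reflexivity.
Qed.

Lemma K_ex x mu : 0 < x -> ex_RInt_gen (ki x mu) (at_point 0) (Rbar_locally p_infty).
Proof.
  intros Hx.
  apply ex_gen with (M := exp (Rabs mu)) (C := exp (2 * (Rabs mu+2) * (Rabs mu+2) / x)).
  - apply at_point_filter.
  - simpl. split. lra. split.
    + intros b Hb. apply ex_RInt_cont. intros; apply ki_cont.
    + intros t Ht. rewrite Rabs_pos_eq by (left; apply ki_pos). unfold ki.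
      replace (exp (Rabs mu)) with (1 * exp (Rabs mu)) by ring.
      apply Rmult_le_compat. left; apply exp_pos. left; apply cosh_pos.
      rewrite <- exp_0. pose proof (cosh_pos t).
      assert (- x * cosh t < 0) by nra. left; apply exp_increasing; lra.
      eapply Rle_trans. apply cosh_le_exp.
      destruct (Req_dec (Rabs (mu * t)) (Rabs mu)) as [E|E]. rewrite E; lra.
      left; apply exp_increasing. rewrite Rabs_mult, (Rabs_pos_eq t) by lra.
      pose proof (Rabs_pos mu).
      assert (Rabs mu * t <= Rabs mu * 1) by (apply Rmult_le_compat_l; lra). 
      rewrite Rabs_mult, (Rabs_pos_eq t) in E by lra. lra.
  - intros eps. simpl. apply cond_pos.
  - intros t Ht. apply ki_tail; auto.
Qed.

Lemma K_is x mu : 0 < x -> is_RInt_gen (ki x mu) (at_point 0) (Rbar_locally p_infty) (RInt_gen (ki x mu) (at_point 0) (Rbar_locally p_infty)).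
Proof.
  intros Hx. apply (RInt_gen_correct (V := R_CompleteNormedModule)).
  apply K_ex; auto.
Qed.

Lemma K_pos x mu : 0 < x -> 0 < RInt_gen (ki x mu) (at_point 0) (Rbar_locally p_infty).
Proof.
  intros Hx. apply gen_pos with (f := ki x mu) (Fa := at_point 0).
  - apply at_point_filter.
  - simpl. split. lra. intros b Hb. apply ex_RInt_cont. intros; apply ki_cont.
  - intros t Ht. left; apply ki_pos.
  - intros t Ht. apply ki_pos.
  - intros t Ht. apply ki_cont.
  - apply K_is; auto.
Qed.

Definition Kf x mu := RInt_gen (ki x mu) (at_point 0) (Rbar_locally p_infty).

Lemma deriv_hk (x nu t : R) : 0 < x ->
  is_derive (fun t => - (2 / x) * (exp (- x * cosh t) * sinh (nu * t))) t
    (ki x (nu+1) t - ki x (nu-1) t - 2 * nu / x * ki x nu t).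
Proof.
  intros Hx. unfold ki, cosh, sinh.
  replace (exp ((nu + 1) * t)) with (exp (nu * t) * exp t) by (rewrite <- exp_plus; f_equal; ring).
  replace (exp (- ((nu + 1) * t))) with (exp (- (nu * t)) * exp (- t)) by (rewrite <- exp_plus; f_equal; ring).
  replace (exp ((nu - 1) * t)) with (exp (nu * t) * exp (- t)) by (rewrite <- exp_plus; f_equal; ring).
  replace (exp (- ((nu - 1) * t))) with (exp (- (nu * t)) * exp t) by (rewrite <- exp_plus; f_equal; ring).
  auto_derive. auto. match goal with |- ?a = ?b => change (@eq R a b) end. unfold Rdiv. field. lra.
Qed.

Lemma K_rec x nu : 0 < x -> Kf x (nu+1) = Kf x (nu-1) + 2 * nu / x * Kf x nu.
Proof.
  intros Hx.
  set (h := fun t => - (2 / x) * (exp (- x * cosh t) * sinh (nu * t))).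
  assert (HD : forall t, Derive h t = ki x (nu+1) t - ki x (nu-1) t - 2 * nu / x * ki x nu t).
  { intros t. apply is_derive_unique. apply deriv_hk; auto. }
  assert (HT0 : at_point 0 (fun _ : R => True)) by exact I.
  assert (HTi : Rbar_locally p_infty (fun _ : R => True)) by (exists 0; auto).
  assert (I1 : is_RInt_gen (Derive h) (at_point 0) (Rbar_locally p_infty) (0 - 0)).
  { apply is_RInt_gen_Derive.
    - apply Filter_prod with (1 := HT0) (2 := HTi). intros a b _ _ y _.
      eexists. apply deriv_hk; auto.
    - apply Filter_prod with (1 := HT0) (2 := HTi). intros a b _ _ y _.
      apply continuous_ext_loc with (fun y => ki x (nu+1) y - ki x (nu-1) y - 2 * nu / x * ki x nu y).
      + exists (mkposreal 1 Rlt_0_1). intros z _. symmetry. apply HD.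
      + apply exd_cont. unfold ki, cosh. auto_derive. auto.
    - apply (proj2 (filterlim_locally (F := at_point 0) h 0)).
      intros eps. simpl. change (Rabs (h 0 - 0) < eps). unfold h.
      rewrite Rmult_0_r, sinh_0, Rmult_0_r, Rmult_0_r, Rminus_0_r, Rabs_R0. apply cond_pos.
    - apply (proj2 (filterlim_locally (F := Rbar_locally p_infty) h 0)).
      intros eps. set (C := 2 / x * exp (2 * (Rabs nu+2) * (Rabs nu+2) / x)).
      assert (HC : 0 < C) by (unfold C; apply Rmult_lt_0_compat; [apply Rdiv_lt_0_compat; lra | apply exp_pos]).
      exists (Rmax 1 (C / eps)). intros y Hy.
      pose proof (Rmax_l 1 (C/eps)). pose proof (Rmax_r 1 (C/eps)).
      change (Rabs (h y - 0) < eps). rewrite Rminus_0_r. unfold h.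
      assert (Hb : Rabs (exp (- x * cosh y) * sinh (nu * y)) <= exp (2 * (Rabs nu+2) * (Rabs nu+2) / x) / (y*y)).
      { eapply Rle_trans. 2: apply kexp_bound; auto; try lra; apply Rabs_pos.
        rewrite Rabs_mult, Rabs_pos_eq by (left; apply exp_pos).
        apply Rmult_le_compat_l. left; apply exp_pos.
        eapply Rle_trans. apply sinh_le_exp. rewrite Rabs_mult, (Rabs_pos_eq y) by lra. lra. }
      rewrite Rabs_mult. rewrite Rabs_Ropp, Rabs_pos_eq by (left; apply Rdiv_lt_0_compat; lra).
      pose proof (cond_pos eps).
      apply Rle_lt_trans with (C / y).
      + apply Rle_trans with (2 / x * (exp (2 * (Rabs nu + 2) * (Rabs nu + 2) / x) / (y*y))).
        apply Rmult_le_compat_l; [left; apply Rdiv_lt_0_compat; lra | exact Hb].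
        replace (2 / x * (exp (2 * (Rabs nu + 2) * (Rabs nu + 2) / x) / (y*y))) with (C / (y*y)) by (unfold C; field; split; lra).
        unfold Rdiv; apply Rmult_le_compat_l; [lra|]; apply Rinv_le_contravar; nra.
      + apply Rmult_lt_reg_r with y. lra. unfold Rdiv. rewrite Rmult_assoc, Rinv_l, Rmult_1_r by lra.
        assert (C / eps < y) by lra.
        apply Rmult_lt_reg_r with (/ eps). apply Rinv_0_lt_compat; lra.
        replace (eps * y * / eps) with y by (field; lra). lra. }
  assert (I2 := K_is x (nu-1) Hx).
  assert (I2' := K_is x nu Hx).
  assert (I3 : is_RInt_gen (fun y => plus (Derive h y) (plus (ki x (nu-1) y) (scal (2 * nu / x) (ki x nu y)))) (at_point 0) (Rbar_locally p_infty)
      (plus (0 - 0) (plus (Kf x (nu-1)) (scal (2 * nu / x) (Kf x nu))))).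
  { exact (is_RInt_gen_plus (V:=R_NormedModule) (Fa:=at_point 0) (Fb:=Rbar_locally p_infty) (Derive h) _ _ _ I1
      (is_RInt_gen_plus (V:=R_NormedModule) (Fa:=at_point 0) (Fb:=Rbar_locally p_infty) (ki x (nu-1)) _ _ _ I2
      (is_RInt_gen_scal (V:=R_NormedModule) (Fa:=at_point 0) (Fb:=Rbar_locally p_infty) (ki x nu) (2 * nu / x) _ I2'))). }
  assert (I4 : is_RInt_gen (ki x (nu+1)) (at_point 0) (Rbar_locally p_infty)
      (plus (0 - 0) (plus (Kf x (nu-1)) (scal (2 * nu / x) (Kf x nu))))).
  { apply is_RInt_gen_ext with (2 := I3).
    apply Filter_prod with (1 := HT0) (2 := HTi). intros a b _ _ y _.
    rewrite HD. change (ki x (nu + 1) y - ki x (nu - 1) y - 2 * nu / x * ki x nu y + (ki x (nu - 1) y + 2 * nu / x * ki x nu y) = ki x (nu+1) y). ring. }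
  apply (is_RInt_gen_unique (V := R_CompleteNormedModule)) in I4.
  unfold Kf at 1. rewrite I4.
  change (0 - 0 + (Kf x (nu-1) + 2 * nu / x * Kf x nu) = Kf x (nu - 1) + 2 * nu / x * Kf x nu). ring.
Qed.


Lemma Gamma_eq s : Gamma s = RInt_gen (gi s) (at_right 0) (Rbar_locally p_infty).
Proof. reflexivity. Qed.

Lemma Gamma_pos s : 1 <= s -> 0 < Gamma s.
Proof. intros; rewrite Gamma_eq; apply Gamma_pos'; auto. Qed.

Lemma Gamma_succ s : 1 <= s -> Gamma (s+1) = s * Gamma s.
Proof. intros; rewrite !Gamma_eq; apply Gamma_succ'; auto. Qed.

Definition T (nu x : R) (k : nat) :=
  (x / 2) ^ (2 * k) * Rpower (x / 2) nu / (INR (fact k) * Gamma (INR k + nu + 1)).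

Lemma BesselI_eq nu x : BesselI nu x = Series (T nu x).
Proof. reflexivity. Qed.

Lemma INR_fact_pos k : 0 < INR (fact k).
Proof. apply lt_0_INR. apply lt_O_fact. Qed.

Lemma T_pos nu x k : 0 <= nu -> 0 < x -> 0 < T nu x k.
Proof.
  intros Hnu Hx. unfold T. apply Rdiv_lt_0_compat.
  apply Rmult_lt_0_compat. apply pow_lt; lra. apply exp_pos.
  apply Rmult_lt_0_compat. apply INR_fact_pos. apply Gamma_pos. pose proof (pos_INR k); lra.
Qed.

Lemma Gamma_mono nu k : 0 <= nu -> Gamma (nu + 1) <= Gamma (INR k + nu + 1).
Proof.
  intros Hnu. induction k.
  - simpl. replace (0 + nu + 1) with (nu + 1) by ring. lra.
  - rewrite S_INR. replace (INR k + 1 + nu + 1) with ((INR k + nu + 1) + 1) by ring.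
    rewrite (Gamma_succ (INR k + nu + 1)) by (pose proof (pos_INR k); lra).
    pose proof (pos_INR k). pose proof (Gamma_pos (INR k + nu + 1) ltac:(lra)).
    assert (0 <= (INR k + nu) * Gamma (INR k + nu + 1)) by (apply Rmult_le_pos; lra).
    replace ((INR k + nu + 1) * Gamma (INR k + nu + 1)) with ((INR k + nu) * Gamma (INR k + nu + 1) + Gamma (INR k + nu + 1)) by ring.
    lra.
Qed.

Lemma ex_series_expo y : ex_series (fun k => y ^ k / INR (fact k)).
Proof.
  exists (exp y). pose proof (is_exp_Reals y) as H. unfold is_pseries in H.
  eapply is_series_ext. 2: exact H. intros n. simpl. rewrite pow_n_pow. reflexivity.
Qed.

Lemma T_ex nu x : 0 <= nu -> 0 < x -> ex_series (T nu x).
Proof.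
  intros Hnu Hx.
  set (K := Rpower (x/2) nu / Gamma (nu + 1)).
  assert (HG : 0 < Gamma (nu + 1)) by (apply Gamma_pos; lra).
  apply (ex_series_le (K := R_AbsRing) (V := R_CompleteNormedModule) _ (fun k => K * ((x/2 * (x/2)) ^ k / INR (fact k)))).
  - intros k. change (norm (T nu x k)) with (Rabs (T nu x k)).
    rewrite Rabs_pos_eq by (left; apply T_pos; auto).
    unfold T, K. rewrite pow_mult.
    replace ((x/2)^2) with (x/2*(x/2)) by ring.
    pose proof (Gamma_mono nu k Hnu). pose proof (INR_fact_pos k).
    assert (0 < (x / 2 * (x / 2)) ^ k) by (apply pow_lt; nra).
    assert (0 < Rpower (x/2) nu) by apply exp_pos.
    set (A := (x/2*(x/2))^k * Rpower (x/2) nu / INR (fact k)).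
    assert (HA : 0 < A) by (unfold A; apply Rdiv_lt_0_compat; auto; apply Rmult_lt_0_compat; auto).
    pose proof (Gamma_pos (INR k + nu + 1) ltac:(pose proof (pos_INR k); lra)).
    replace ((x / 2 * (x / 2)) ^ k * Rpower (x / 2) nu / (INR (fact k) * Gamma (INR k + nu + 1)))
      with (A / Gamma (INR k + nu + 1)) by (unfold A; field; lra).
    replace (Rpower (x / 2) nu / Gamma (nu + 1) * ((x / 2 * (x / 2)) ^ k / INR (fact k)))
      with (A / Gamma (nu + 1)) by (unfold A; field; lra).
    unfold Rdiv. apply Rmult_le_compat_l. lra. apply Rinv_le_contravar; auto.
  - apply (ex_series_scal_l (K := R_AbsRing) (V := R_NormedModule) K), ex_series_expo.
Qed.

Lemma Series_pos (a : nat -> R) : ex_series a -> (forall k, 0 < a k) -> 0 < Series a.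
Proof.
  intros He Hp. rewrite Series_incr_1 by auto.
  assert (E : Series (fun _ : nat => 0) = 0).
  { rewrite (Series_ext (fun _ => 0) (fun n => 0 * a n)) by (intros; ring).
    rewrite Series_scal_l. ring. }
  assert (0 <= Series (fun k => a (S k))).
  { rewrite <- E. apply Series_le. intros n; split; [lra| left; apply Hp].
    apply (ex_series_incr_1 (K := R_AbsRing) (V := R_NormedModule) a). auto. }
  pose proof (Hp 0%nat). lra.
Qed.

Lemma BI_pos nu x : 0 <= nu -> 0 < x -> 0 < BesselI nu x.
Proof.
  intros. rewrite BesselI_eq. apply Series_pos. apply T_ex; auto. intros; apply T_pos; auto.
Qed.

Lemma Rpower_succ c nu : 0 < c -> Rpower c (nu + 1) = Rpower c nu * c.
Proof. intros. rewrite Rpower_plus, Rpower_1; auto. Qed.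

Lemma Gamma_k1 nu k : 0 <= nu -> Gamma (INR k + (nu + 1) + 1) = (INR k + nu + 1) * Gamma (INR k + nu + 1).
Proof.
  intros. replace (INR k + (nu + 1) + 1) with ((INR k + nu + 1) + 1) by ring.
  apply Gamma_succ. pose proof (pos_INR k); lra.
Qed.

Lemma Gamma_Sk nu k : 0 <= nu -> Gamma (INR (S k) + nu + 1) = (INR k + nu + 1) * Gamma (INR k + nu + 1).
Proof.
  intros. rewrite S_INR. replace (INR k + 1 + nu + 1) with ((INR k + nu + 1) + 1) by ring.
  apply Gamma_succ. pose proof (pos_INR k); lra.
Qed.

Lemma T_rec0 nu x : 0 <= nu -> 0 < x -> x * T nu x 0 = 2 * (nu + 1) * T (nu + 1) x 0.
Proof.
  intros Hnu Hx. unfold T.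
  pose proof (Gamma_k1 nu 0 Hnu) as E. rewrite E. rewrite Rpower_succ by lra.
  pose proof (Gamma_pos (INR 0 + nu + 1) ltac:(simpl; lra)).
  simpl INR. simpl fact. simpl pow. simpl INR in H. simpl INR.
  field. split; lra.
Qed.

Lemma T_rec nu x k : 0 <= nu -> 0 < x ->
  x * T nu x (S k) = x * T (nu + 2) x k + 2 * (nu + 1) * T (nu + 1) x (S k).
Proof.
  intros Hnu Hx. unfold T.
  set (G := Gamma (INR k + nu + 1)).
  assert (HG : 0 < G) by (apply Gamma_pos; pose proof (pos_INR k); lra).
  assert (E1 : Gamma (INR (S k) + nu + 1) = (INR k + nu + 1) * G) by (apply Gamma_Sk; auto).
  assert (E2 : Gamma (INR k + (nu + 2) + 1) = (INR k + nu + 2) * ((INR k + nu + 1) * G)).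
  { replace (INR k + (nu + 2) + 1) with (INR k + (nu + 1) + 1 + 1) by ring.
    rewrite Gamma_succ by (pose proof (pos_INR k); lra).
    rewrite Gamma_k1 by auto. fold G. ring. }
  assert (E3 : Gamma (INR (S k) + (nu + 1) + 1) = (INR k + nu + 2) * ((INR k + nu + 1) * G)).
  { rewrite Gamma_Sk by lra. rewrite Gamma_k1 by auto. fold G. ring. }
  rewrite E1, E2, E3.
  rewrite !Rpower_succ by lra.
  replace (nu + 2) with ((nu + 1) + 1) by ring. rewrite !Rpower_succ by lra.
  replace (2 * S k)%nat with (S (S (2 * k))) by lia. simpl pow.
  rewrite fact_simpl, mult_INR, S_INR.
  pose proof (INR_fact_pos k). pose proof (pos_INR k).
  field. repeat split; lra.
Qed.

Lemma BI_rec nu x : 0 <= nu -> 0 < x ->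
  x * BesselI nu x = x * BesselI (nu + 2) x + 2 * (nu + 1) * BesselI (nu + 1) x.
Proof.
  intros Hnu Hx. rewrite !BesselI_eq.
  assert (X0 := T_ex nu x Hnu Hx).
  assert (X1 := T_ex (nu+1) x ltac:(lra) Hx).
  assert (X2 := T_ex (nu+2) x ltac:(lra) Hx).
  assert (X1' : ex_series (fun k => T (nu+1) x (S k))) by
    (apply (proj1 (ex_series_incr_1 (K := R_AbsRing) (V := R_NormedModule) (T (nu+1) x))); auto).
  rewrite (Series_incr_1 (T nu x)) by auto.
  rewrite (Series_incr_1 (T (nu+1) x)) by auto.
  rewrite Rmult_plus_distr_l, <- Series_scal_l.
  rewrite (Series_ext _ (fun k => x * T (nu + 2) x k + 2 * (nu + 1) * T (nu + 1) x (S k)))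
    by (intros; apply T_rec; auto).
  rewrite Series_plus.
  - rewrite !Series_scal_l. rewrite T_rec0 by auto. ring.
  - apply (ex_series_scal_l (K := R_AbsRing) (V := R_NormedModule) x); auto.
  - apply (ex_series_scal_l (K := R_AbsRing) (V := R_NormedModule) (2 * (nu + 1))); auto.
Qed.


Section Seqs.
Variable x : R.
Hypothesis Hx : 0 < x.

Definition sq (c : R) := sqrt (c * c + x * x).

Lemma sq_sq c : sq c * sq c = c * c + x * x.
Proof. unfold sq. apply sqrt_sqrt. nra. Qed.

Lemma sq_gt c : 0 <= c -> c < sq c.
Proof.
  intros Hc. unfold sq. rewrite <- (sqrt_square c) at 1 by auto.
  apply sqrt_lt_1_alt. nra.
Qed.

Lemma sq_gtx c : x <= sq c.
Proof.
  unfold sq. rewrite <- (sqrt_square x) at 1 by lra.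
  apply sqrt_le_1_alt. nra.
Qed.

Lemma sq_mono c1 c2 : 0 <= c1 <= c2 -> sq c1 <= sq c2.
Proof. intros H. unfold sq. apply sqrt_le_1_alt. nra. Qed.

Lemma sq_div c : 0 <= c -> x * x / (c + sq c) = sq c - c.
Proof.
  intros Hc. pose proof (sq_gt c Hc). pose proof (sq_sq c).
  field_simplify_eq; [| lra]. nra.
Qed.

Definition Lb (m : nat) := INR m + /2 + sq (INR m + /2).
Definition Ub (m : nat) := INR m + 3/2 + sq (INR m + 3/2).

Lemma beta_bounds (b : nat -> R) :
  b 0%nat = 1 + x -> (forall m, 0 < b m) ->
  (forall m, b (S m) = 2 * INR m + 3 + x * x / b m) ->
  forall m, Lb m <= b m <= Ub m.
Proof.
  intros H0 Hpos Hrec m. induction m.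
  - rewrite H0. unfold Lb, Ub. simpl INR.
    split.
    + assert (sq (0 + /2) <= /2 + x).
      { unfold sq. rewrite <- (sqrt_square (/2 + x)) by lra. apply sqrt_le_1_alt. nra. }
      lra.
    + pose proof (sq_gtx (0 + 3/2)). lra.
  - destruct IHm as [IL IU]. rewrite Hrec. pose proof (pos_INR m).
    assert (0 < Lb m) by (unfold Lb; pose proof (sq_gt (INR m + /2)); lra).
    split.
    + assert (x * x / Ub m <= x * x / b m).
      { unfold Rdiv. apply Rmult_le_compat_l. nra. apply Rinv_le_contravar; auto. }
      unfold Ub in H2. rewrite sq_div in H2 by lra.
      unfold Lb. rewrite S_INR. replace (INR m + 1 + /2) with (INR m + 3/2) by field. lra.
    + assert (x * x / b m <= x * x / Lb m).
      { unfold Rdiv. apply Rmult_le_compat_l. nra. apply Rinv_le_contravar; auto. }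
      unfold Lb in H2. rewrite sq_div in H2 by lra.
      unfold Ub. rewrite S_INR. replace (INR m + 1 + 3/2) with (INR m + 5/2) by field.
      pose proof (sq_mono (INR m + /2) (INR m + 5/2) ltac:(lra)). lra.
Qed.

Definition Fb (m : nat) := sq (INR m + /2) - (INR m + /2).
Definition Gb (m : nat) := sq (INR m + 3/2) - (INR m + 3/2).

Section ISide.
Variable a : nat -> R.
Hypothesis Hapos : forall m, 0 < a m.
Hypothesis Harec : forall m, a m * (2 * INR m + 3 + a (S m)) = x * x.

Lemma a_eq m : a m = x * x / (2 * INR m + 3 + a (S m)).
Proof.
  pose proof (Harec m). pose proof (Hapos (S m)). pose proof (pos_INR m).
  apply Rmult_eq_reg_r with (2 * INR m + 3 + a (S m)). 2: lra.
  rewrite H. field. lra.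
Qed.

Lemma Gb_pos m : 0 < Gb m.
Proof. unfold Gb. pose proof (pos_INR m). pose proof (sq_gt (INR m + 3/2)). lra. Qed.

Lemma Gb_eq m : Gb m = x * x / (2 * INR m + 3 + Fb (S m)).
Proof.
  unfold Gb, Fb. rewrite S_INR. pose proof (pos_INR m).
  replace (INR m + 1 + /2) with (INR m + 3/2) by field.
  replace (2 * INR m + 3 + (sq (INR m + 3/2) - (INR m + 3/2))) with (INR m + 3/2 + sq (INR m + 3/2)) by field.
  rewrite sq_div; lra.
Qed.

Lemma Fb_ge m : x * x / (2 * INR m + 3 + Gb (S m)) <= Fb m.
Proof.
  unfold Gb, Fb. rewrite S_INR. pose proof (pos_INR m).
  replace (INR m + 1 + 3/2) with (INR m + 5/2) by field.
  replace (2 * INR m + 3 + (sq (INR m + 5/2) - (INR m + 5/2))) with (INR m + /2 + sq (INR m + 5/2)) by field.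
  rewrite <- (sq_div (INR m + /2)) by lra.
  pose proof (sq_mono (INR m + /2) (INR m + 5/2) ltac:(lra)).
  pose proof (sq_gt (INR m + /2) ltac:(lra)).
  unfold Rdiv. apply Rmult_le_compat_l. nra. apply Rinv_le_contravar; lra.
Qed.

Definition Dd (m : nat) := Rmax (Rmax (a m - Fb m) (Gb m - a m)) 0.

Lemma diff_bound (p q m : nat -> R) k (u v : R) : 0 <= u -> 0 <= v -> 0 < k ->
  x * x / (k + u) - x * x / (k + v) <= x * x / (k * k) * Rmax (v - u) 0.
Proof.
  intros Hu Hv Hk.
  replace (x * x / (k + u) - x * x / (k + v)) with (x * x * (v - u) / ((k+u) * (k+v))) by (field; lra).
  destruct (Rle_dec (v - u) 0).
  - rewrite Rmax_right by lra. rewrite Rmult_0_r.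
    unfold Rdiv. assert (0 < / ((k+u)*(k+v))) by (apply Rinv_0_lt_compat; nra).
    assert (0 <= x * x * (u - v) * / ((k+u)*(k+v))) by (apply Rmult_le_pos; [apply Rmult_le_pos; nra | lra]).
    replace (x * x * (v - u) * / ((k + u) * (k + v))) with (- (x * x * (u - v) * / ((k+u)*(k+v)))) by ring.
    lra.
  - rewrite Rmax_left by lra.
    unfold Rdiv. rewrite (Rmult_comm (x * x * / (k*k))).
    replace (x * x * (v - u) * / ((k + u) * (k + v))) with ((v - u) * (x * x * / ((k + u) * (k + v)))) by ring.
    apply Rmult_le_compat_l. lra. apply Rmult_le_compat_l. nra.
    apply Rinv_le_contravar; nra.
Qed.

Lemma Dd_step m : Dd m <= x * x / ((2 * INR m + 3) * (2 * INR m + 3)) * Dd (S m).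
Proof.
  pose proof (pos_INR m).
  set (k := 2 * INR m + 3). assert (Hk : 0 < k) by (unfold k; lra).
  set (r := x * x / (k * k)). assert (Hr : 0 <= r) by (unfold r; apply Rmult_le_pos; [nra| left; apply Rinv_0_lt_compat; nra]).
  assert (HFp : 0 <= Fb (S m)) by (unfold Fb; pose proof (pos_INR (S m)); pose proof (sq_gt (INR (S m) + /2)); lra).
  pose proof (Gb_pos (S m)). pose proof (Hapos (S m)).
  assert (T1 : a m - Fb m <= r * Rmax (Gb (S m) - a (S m)) 0).
  { rewrite a_eq. pose proof (Fb_ge m). fold k in H2 |- *.
    pose proof (diff_bound a a a k (a (S m)) (Gb (S m)) ltac:(lra) ltac:(lra) Hk). fold r in H3. lra. }
  assert (T2 : Gb m - a m <= r * Rmax (a (S m) - Fb (S m)) 0).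
  { rewrite a_eq, Gb_eq. fold k.
    pose proof (diff_bound a a a k (Fb (S m)) (a (S m)) HFp ltac:(lra) Hk). fold r in H2. lra. }
  assert (M1 : Rmax (Gb (S m) - a (S m)) 0 <= Dd (S m)).
  { unfold Dd. apply Rmax_lub. eapply Rle_trans; [apply Rmax_r | apply Rmax_l]. apply Rmax_r. }
  assert (M2 : Rmax (a (S m) - Fb (S m)) 0 <= Dd (S m)).
  { unfold Dd. apply Rmax_lub. eapply Rle_trans; [apply Rmax_l | apply Rmax_l]. apply Rmax_r. }
  assert (M0 : 0 <= Dd (S m)) by (unfold Dd; apply Rmax_r).
  fold k r. unfold Dd at 1.
  assert (r * Rmax (Gb (S m) - a (S m)) 0 <= r * Dd (S m)) by (apply Rmult_le_compat_l; auto).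
  assert (r * Rmax (a (S m) - Fb (S m)) 0 <= r * Dd (S m)) by (apply Rmult_le_compat_l; auto).
  assert (0 <= r * Dd (S m)) by (apply Rmult_le_pos; auto).
  apply Rmax_lub; [apply Rmax_lub|]; lra.
Qed.
Lemma Dd_nonneg m : 0 <= Dd m.
Proof. unfold Dd. apply Rmax_r. Qed.

Lemma Fb_nonneg m : 0 <= Fb m.
Proof. unfold Fb. pose proof (pos_INR m). pose proof (sq_gt (INR m + /2)). lra. Qed.

Lemma xx_div_le k u : 1 <= k -> 0 <= u -> x * x / (k + u) <= x * x.
Proof.
  intros Hk Hu. unfold Rdiv. rewrite <- (Rmult_1_r (x * x)) at 2.
  apply Rmult_le_compat_l. nra. rewrite <- Rinv_1. apply Rinv_le_contravar; lra.
Qed.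

Lemma Dd_bound m : Dd m <= x * x.
Proof.
  pose proof (pos_INR m). pose proof (Hapos (S m)). pose proof (Hapos m).
  pose proof (Fb_nonneg m). pose proof (Fb_nonneg (S m)).
  assert (a m <= x * x) by (rewrite a_eq; apply xx_div_le; lra).
  assert (Gb m <= x * x) by (rewrite Gb_eq; apply xx_div_le; lra).
  unfold Dd. apply Rmax_lub. apply Rmax_lub; lra. nra.
Qed.

Lemma Dd_far k : forall m, x <= INR m -> Dd m <= x * x * (/4) ^ k.
Proof.
  induction k; intros m Hm.
  - simpl. rewrite Rmult_1_r. apply Dd_bound.
  - eapply Rle_trans. apply Dd_step.
    assert (HS : x <= INR (S m)) by (rewrite S_INR; lra).
    pose proof (IHk (S m) HS). pose proof (pos_INR m).
    assert (Hr : x * x / ((2 * INR m + 3) * (2 * INR m + 3)) <= /4).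
    { apply Rmult_le_reg_r with ((2 * INR m + 3) * (2 * INR m + 3)). nra.
      unfold Rdiv. rewrite Rmult_assoc, Rinv_l, Rmult_1_r by nra. nra. }
    assert (0 <= x * x / ((2 * INR m + 3) * (2 * INR m + 3))).
    { unfold Rdiv. apply Rmult_le_pos. nra. left; apply Rinv_0_lt_compat; nra. }
    pose proof (Dd_nonneg (S m)).
    simpl pow.
    apply Rle_trans with (/4 * Dd (S m)). apply Rmult_le_compat_r; auto.
    replace (x * x * (/ 4 * (/ 4) ^ k)) with (/4 * (x * x * (/4) ^ k)) by ring.
    apply Rmult_le_compat_l; lra.
Qed.

Lemma Dd_zero_far m : x <= INR m -> Dd m = 0.
Proof.
  intros Hm. pose proof (Dd_nonneg m).
  destruct (Req_dec (Dd m) 0) as [E|E]; auto. exfalso.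
  assert (Hp : 0 < Dd m / (x * x)) by (apply Rdiv_lt_0_compat; nra).
  destruct (pow_lt_1_zero (/4) ltac:(rewrite Rabs_pos_eq; lra) _ Hp) as [N HN].
  specialize (HN N (le_n N)). rewrite Rabs_pos_eq in HN by (apply pow_le; lra).
  pose proof (Dd_far N m Hm).
  assert (x * x * (/ 4) ^ N < Dd m).
  { apply Rmult_lt_reg_r with (/ (x * x)). apply Rinv_0_lt_compat; nra.
    replace (x * x * (/ 4) ^ N * / (x * x)) with ((/4)^N) by (field; lra). exact HN. }
  lra.
Qed.

Lemma nat_above : exists m0 : nat, x <= INR m0.
Proof.
  destruct (archimed x) as [H1 H2].
  exists (Z.to_nat (up x)). rewrite INR_IZR_INZ, Z2Nat.id. lra.
  apply le_IZR. lra.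
Qed.

Lemma Dd_zero m : Dd m = 0.
Proof.
  destruct nat_above as [m0 Hm0].
  assert (forall d m, (m0 <= m + d)%nat -> Dd m = 0).
  { induction d; intros m' Hm'.
    - apply Dd_zero_far. rewrite Nat.add_0_r in Hm'. apply le_INR in Hm'. lra.
    - pose proof (IHd (S m') ltac:(lia)). pose proof (Dd_step m'). rewrite H in H0.
      rewrite Rmult_0_r in H0. pose proof (Dd_nonneg m'). lra. }
  apply (H m0 m). lia.
Qed.

Lemma a_le_F m : a m <= Fb m.
Proof.
  pose proof (Dd_zero m). unfold Dd in H.
  assert (a m - Fb m <= Rmax (Rmax (a m - Fb m) (Gb m - a m)) 0).
  { eapply Rle_trans; [apply Rmax_l | apply Rmax_l]. }
  lra.
Qed.
End ISide.
End Seqs.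


Lemma Kf_half x : 0 < x -> Kf x (/2 - 1) = Kf x (/2).
Proof.
  intros Hx. unfold Kf. apply (RInt_gen_ext_eq (V := R_CompleteNormedModule)).
  - intros t. change (ki x (/2 - 1) t = ki x (/2) t). unfold ki. f_equal. unfold cosh.
    assert (E : (/2 - 1) * t = - (/2 * t)) by lra. rewrite E, Ropp_involutive. lra.
  - apply K_ex; auto.
Qed.

Lemma Kf_pos x mu : 0 < x -> 0 < Kf x mu.
Proof. intros Hx. unfold Kf. exact (K_pos x mu Hx). Qed.

Theorem lemma3 (n : nat) (x : R) (hx : 0 < x) :
  2 * INR n / x + sph_i (S n) x / sph_i n x - sph_k (S n) x / sph_k n x < 0.
Proof.
  set (nu := fun m : nat => INR m + /2).
  assert (Hnu : forall m, 0 <= nu m) by (intros m; unfold nu; pose proof (pos_INR m); lra).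
  assert (HnuS : forall m, nu (S m) = nu m + 1) by (intros m; unfold nu; rewrite S_INR; ring).
  set (a := fun m => x * BesselI (nu m + 1) x / BesselI (nu m) x).
  set (b := fun m => x * Kf x (nu m + 1) / Kf x (nu m)).
  assert (Hapos : forall m, 0 < a m).
  { intros m. unfold a. apply Rdiv_lt_0_compat. apply Rmult_lt_0_compat; auto.
    apply BI_pos; auto. pose proof (Hnu m); lra. apply BI_pos; auto. }
  assert (Harec : forall m, a m * (2 * INR m + 3 + a (S m)) = x * x).
  { intros m. unfold a. rewrite HnuS.
    pose proof (BI_rec (nu m) x (Hnu m) hx) as R.
    replace (nu m + 1 + 1) with (nu m + 2) by ring.
    pose proof (BI_pos (nu m) x (Hnu m) hx).
    pose proof (BI_pos (nu m + 1) x ltac:(pose proof (Hnu m); lra) hx).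
    assert (E : BesselI (nu m + 2) x = (x * BesselI (nu m) x - 2 * (nu m + 1) * BesselI (nu m + 1) x) / x)
      by (apply Rmult_eq_reg_l with x; [|lra];
          replace (x * ((x * BesselI (nu m) x - 2 * (nu m + 1) * BesselI (nu m + 1) x) / x))
            with (x * BesselI (nu m) x - 2 * (nu m + 1) * BesselI (nu m + 1) x) by (field; lra);
          rewrite R; ring).
    rewrite E. unfold nu in *. field. repeat split; lra. }
  assert (Hbpos : forall m, 0 < b m).
  { intros m. unfold b. apply Rdiv_lt_0_compat. apply Rmult_lt_0_compat; auto.
    exact (Kf_pos x _ hx). exact (Kf_pos x _ hx). }
  assert (Hb0 : b 0%nat = 1 + x).
  { unfold b, nu. simpl INR. replace (0 + /2) with (/2) by ring.
    pose proof (K_rec x (/2) hx) as R. rewrite Kf_half in R by auto.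
    rewrite R. pose proof (Kf_pos x (/2) hx). field. lra. }
  assert (Hbrec : forall m, b (S m) = 2 * INR m + 3 + x * x / b m).
  { intros m. unfold b. rewrite HnuS.
    pose proof (K_rec x (nu m + 1) hx) as R.
    replace (nu m + 1 - 1) with (nu m) in R by ring. rewrite R.
    pose proof (Kf_pos x (nu m) hx). pose proof (Kf_pos x (nu m + 1) hx).
    unfold nu in *. field. repeat split; lra. }
  pose proof (a_le_F x hx a Hapos Harec n) as HA.
  pose proof (proj1 (beta_bounds x hx b Hb0 Hbpos Hbrec n)) as HB.
  unfold Fb in HA. unfold Lb in HB.
  assert (Ei : sph_i (S n) x / sph_i n x = a n / x).
  { unfold sph_i, a. rewrite S_INR. fold (nu n).
    replace (INR n + 1 + /2) with (nu n + 1) by (unfold nu; ring).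
    assert (0 < sqrt (PI / (2 * x))) by (apply sqrt_lt_R0; apply Rdiv_lt_0_compat; [apply PI_RGT_0|lra]).
    pose proof (BI_pos (nu n) x (Hnu n) hx).
    field. repeat split; lra. }
  assert (Ek : sph_k (S n) x / sph_k n x = b n / x).
  { unfold sph_k, b. rewrite S_INR. fold (nu n).
    replace (INR n + 1 + /2) with (nu n + 1) by (unfold nu; ring).
    change (BesselK (nu n + 1) x) with (Kf x (nu n + 1)).
    change (BesselK (nu n) x) with (Kf x (nu n)).
    assert (0 < sqrt (2 / (PI * x))) by (apply sqrt_lt_R0; apply Rdiv_lt_0_compat; [lra| pose proof PI_RGT_0; nra]).
    pose proof (Kf_pos x (nu n) hx).
    field. repeat split; lra. }
  rewrite Ei, Ek.
  replace (2 * INR n / x + a n / x - b n / x) with ((2 * INR n + a n - b n) / x) by (field; lra).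
  pose proof (pos_INR n).
  assert (2 * INR n + a n - b n < 0) by lra.
  assert (0 < / x) by (apply Rinv_0_lt_compat; lra).
  unfold Rdiv. nra.
Qed.
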